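(* Let $F \in \mathbb{C}^{n \times n}$ be a unitary matrix and let $y = F\hat{x} + e$, where $\hat{x} \in \mathbb{C}^{n}$ is $k$-sparse and $e \in \mathbb{C}^{n}$. If $\|e\|_2 \leq \eta$, then any solution $x^{\#}$ of the Basis Pursuit problem $\min_{z \in \mathbb{C}^n}\|z\|_1$ subject to $\|Fz - y\|_2 \leq \eta$ satisfies $$\| x^{\#}-\hat{x}\|_1 \leq 4\sqrt{k}\,\eta \quad\text{and}\quad \| x^{\#}-\hat{x}\|_2 \leq 6\eta .$$
   Context: A vector is $k$-sparse if it has at most $k$ nonzero entries. *)

(* Defs.v *)
(* Complex numbers are modelled by an arbitrary
   numClosedFieldType C (e.g. the complex numbers); this generalizes C^n. *)
From HB Require Import structures.
From mathcomp Require Import all_boot all_order all_algebra.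
Set Implicit Arguments. Unset Strict Implicit. Unset Printing Implicit Defensive.
Import Order.TTheory GRing.Theory Num.Theory.
Local Open Scope ring_scope.
Local Open Scope ring_scope.

Definition adjmx (C : numClosedFieldType) (m n : nat) (A : 'M[C]_(m, n)) : 'M[C]_(n, m) :=
  (map_mx Num.conj A)^T.

Definition unitary (C : numClosedFieldType) (n : nat) (F : 'M[C]_n) : Prop :=
  F *m adjmx F = 1%:M /\ adjmx F *m F = 1%:M.

Definition norm1 (C : numClosedFieldType) (n : nat) (x : 'cV[C]_n) : C :=
  \sum_(i < n) `|x i 0|.
Definition norm2 (C : numClosedFieldType) (n : nat) (x : 'cV[C]_n) : C :=
  sqrtC (\sum_(i < n) `|x i 0| ^+ 2).

Definition sparse (C : numClosedFieldType) (n k : nat) (x : 'cV[C]_n) : Prop :=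
  (#|[set i : 'I_n | x i ord0 != 0%R]| <= k)%N.

Definition BP_solution (C : numClosedFieldType) (n : nat) (F : 'M[C]_n)
    (y : 'cV[C]_n) (eta : C) (x : 'cV[C]_n) : Prop :=
  norm2 (F *m x - y) <= eta /\
  forall z : 'cV[C]_n, norm2 (F *m z - y) <= eta -> norm1 x <= norm1 z.

(* Main.v *)
Require Import Defs.
From mathcomp Require Import all_boot all_order all_algebra.
Import Order.TTheory GRing.Theory Num.Theory.
Local Open Scope ring_scope.

Section Aux.
Variable C : numClosedFieldType.

Lemma cs (I : finType) (P : pred I) (u v : I -> C) :
  (forall i, 0 <= u i) -> (forall i, 0 <= v i) ->
  \sum_(i | P i) u i * v i <=
  sqrtC (\sum_(i | P i) u i ^+ 2) * sqrtC (\sum_(i | P i) v i ^+ 2).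
Proof.
move=> u0 v0.
set A := \sum_(i | P i) u i ^+ 2; set B := \sum_(i | P i) v i ^+ 2.
have A0 : 0 <= A by apply: sumr_ge0 => i _; rewrite exprn_ge0.
have B0 : 0 <= B by apply: sumr_ge0 => i _; rewrite exprn_ge0.
have S0 : 0 <= \sum_(i | P i) u i * v i by apply: sumr_ge0 => i _; rewrite mulr_ge0.
have := sqrtC_ge0 A; rewrite A0 le0r => /orP[/eqP a0|aP].
  have Ae : A = 0 by rewrite -[A]sqrtCK a0 expr0n.
  rewrite a0 mul0r big1 // => i Pi.
  have /eqP : u i ^+ 2 = 0 by apply: (psumr_eq0P _ Ae) => // j _; rewrite exprn_ge0.
  by rewrite expf_eq0 /= => /eqP ->; rewrite mul0r.
have := sqrtC_ge0 B; rewrite B0 le0r => /orP[/eqP b0|bP].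
  have Be : B = 0 by rewrite -[B]sqrtCK b0 expr0n.
  rewrite b0 mulr0 big1 // => i Pi.
  have /eqP : v i ^+ 2 = 0 by apply: (psumr_eq0P _ Be) => // j _; rewrite exprn_ge0.
  by rewrite expf_eq0 /= => /eqP ->; rewrite mulr0.
set a := sqrtC A in aP *; set b := sqrtC B in bP *.
have abP : 0 < a * b by rewrite mulr_gt0.
have key : (\sum_(i | P i) u i * v i) * (a * b) *+ 2 <= (a * b) * (a * b) *+ 2.
  have -> : (a * b) * (a * b) *+ 2 = \sum_(i | P i) ((u i * b) ^+ 2 + (v i * a) ^+ 2).
    rewrite (eq_bigr (fun i => u i ^+ 2 * b ^+ 2 + v i ^+ 2 * a ^+ 2)); last first.
      by move=> i _; rewrite !exprMn.
    rewrite big_split /= -!mulr_suml -/A -/B /a /b !sqrtCK.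
    by rewrite mulrACA -!expr2 !sqrtCK // mulr2n [B * A]mulrC.
  rewrite mulr_suml -sumrMnl; apply: ler_sum => i Pi.
  have := real_leif_mean_square_scaled (x := u i * b) (y := v i * a) _ _.
  move=> H; have := (H (ger0_real (mulr_ge0 (u0 i) (ltW bP))) (ger0_real (mulr_ge0 (v0 i) (ltW aP)))).1.
  by rewrite mulrACA [b * a]mulrC.
by move: key; rewrite ler_pMn2r // ler_pM2r.
Qed.

Lemma norm2_ge0 {n} (x : 'cV[C]_n) : 0 <= norm2 x.
Proof. by rewrite /norm2 sqrtC_ge0 sumr_ge0 // => i _; rewrite exprn_ge0. Qed.

Lemma norm2_opp {n} (x : 'cV[C]_n) : norm2 (- x) = norm2 x.
Proof. by rewrite /norm2; congr sqrtC; apply: eq_bigr => i _; rewrite !mxE normrN. Qed.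

Lemma norm2_triangle {n} (x y : 'cV[C]_n) : norm2 (x + y) <= norm2 x + norm2 y.
Proof.
have a0 := norm2_ge0 x; have b0 := norm2_ge0 y.
rewrite {1}/norm2 -(sqrCK (addr_ge0 a0 b0)) ler_sqrtC ?nnegrE ?exprn_ge0 ?addr_ge0 //; last first.
  by rewrite sumr_ge0 // => i _; rewrite exprn_ge0.
apply: (@le_trans _ _ (\sum_(i < n) (`|x i 0| + `|y i 0|) ^+ 2)).
  apply: ler_sum => i _; rewrite mxE.
  rewrite lerXn2r ?nnegrE ?addr_ge0 //; exact: ler_normD.
rewrite sqrrD (eq_bigr (fun i => `|x i 0| ^+ 2 + `|x i 0| * `|y i 0| *+ 2 + `|y i 0| ^+ 2)); last first.
  by move=> i _; rewrite sqrrD.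
rewrite !big_split /= -mulr2n {1 4}/norm2 !sqrtCK ?sumr_ge0 // => *; try by rewrite exprn_ge0.
rewrite lerD2r lerD2l ler_wMn2r //.
exact: (cs _ predT (fun i => `|x i 0|) (fun i => `|y i 0|) (fun i => normr_ge0 _) (fun i => normr_ge0 _)).
Qed.

Lemma sumsq_adj {n} (x : 'cV[C]_n) : \sum_(i < n) `|x i 0| ^+ 2 = (adjmx x *m x) 0 0.
Proof. by rewrite mxE; apply: eq_bigr => i _; rewrite /adjmx !mxE normCK mulrC. Qed.

Lemma norm2_unitary {n} (F : 'M[C]_n) (x : 'cV[C]_n) :
  adjmx F *m F = 1%:M -> norm2 (F *m x) = norm2 x.
Proof.
move=> UF; rewrite /norm2 !sumsq_adj.
have -> : adjmx (F *m x) = adjmx x *m adjmx F by rewrite /adjmx map_mxM trmx_mul.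
by rewrite -mulmxA (mulmxA (adjmx F)) UF mul1mx.
Qed.

End Aux.
Arguments cs {C I}.
Arguments norm2_ge0 {C n}.
Arguments norm2_opp {C n}.
Arguments norm2_triangle {C n}.
Arguments norm2_unitary {C n}.

From mathcomp Require Import ring.

Lemma aux_le (C : numClosedFieldType) (X Y Z : C) : X - Y + Z <= X -> Z <= Y.
Proof. by rewrite -addrA -[leRHS]addr0 lerD2l addrC subr_le0. Qed.

Theorem theorem3 (C : numClosedFieldType) (n k : nat) (F : 'M[C]_n)
    (xhat e : 'cV[C]_n) (eta : C) (xs : 'cV[C]_n) :
  unitary F -> sparse k xhat -> norm2 e <= eta ->
  BP_solution F (F *m xhat + e) eta xs ->
  norm1 (xs - xhat) <= 4 * sqrtC k%:R * eta /\ norm2 (xs - xhat) <= 6 * eta.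
Proof.
move=> [_ UF] sp he [hxs opt].
have eta0 : 0 <= eta := le_trans (norm2_ge0 e) he.
set h := xs - xhat.
have hF : norm2 h <= 2 * eta.
  rewrite -(norm2_unitary F h UF).
  have -> : F *m h = (F *m xs - (F *m xhat + e)) + e.
    by rewrite /h mulmxBr opprD addrA subrK.
  apply: le_trans (norm2_triangle _ _) _.
  by rewrite mulr_natl mulr2n lerD.
split; last first.
  apply: le_trans hF _; apply: ler_wpM2r => //; by rewrite ler_nat.
have feas : norm2 (F *m xhat - (F *m xhat + e)) <= eta.
  by rewrite opprD addrA subrr add0r norm2_opp.
have L := opt xhat feas.
set S := [set i : 'I_n | xhat i ord0 != 0].
have xsE : forall i, xs i 0 = xhat i 0 + h i 0.
  by move=> i; rewrite /h !mxE; ring.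
have hS : \sum_(i < n | i \notin S) `|h i 0| <= \sum_(i < n | i \in S) `|h i 0|.
  have E : \sum_(i < n | i \in S) `|xhat i 0| = norm1 xhat.
    rewrite /norm1 [RHS](bigID (fun i => i \in S)) /= [X in _ = _ + X]big1 ?addr0 // => i.
    by rewrite inE negbK => /eqP ->; rewrite normr0.
  apply: (@aux_le _ (\sum_(i < n | i \in S) `|xhat i 0|)).
  rewrite {2}E; apply: le_trans L.
  rewrite /norm1 (bigID (fun i => i \in S) predT) /=.
  apply: lerD.
    rewrite -sumrB; apply: ler_sum => i _; rewrite xsE; exact: lerB_normD.
  apply: ler_sum => i; rewrite inE negbK => /eqP xi0.
  by rewrite xsE xi0 add0r.
have hS2 : \sum_(i < n | i \in S) `|h i 0| <= norm2 h * sqrtC k%:R.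
  have := cs (fun i => i \in S) (fun i => `|h i 0|) (fun _ => 1) (fun i => normr_ge0 _) (fun i => ler01).
  rewrite (eq_bigr (fun i => `|h i 0|)) => [|j _]; last by rewrite mulr1.
  move/le_trans; apply; apply: ler_pM.
  - by rewrite sqrtC_ge0 sumr_ge0 // => *; rewrite exprn_ge0.
  - by rewrite sqrtC_ge0 sumr_ge0 // => *; rewrite expr1n.
  - rewrite ler_sqrtC ?nnegrE ?sumr_ge0 // => *; try by rewrite exprn_ge0.
    rewrite [leRHS](bigID (fun i => i \in S)) /= lerDl sumr_ge0 // => *.
    by rewrite exprn_ge0.
  - rewrite ler_sqrtC ?nnegrE ?sumr_ge0 ?ler0n // => *; last by rewrite expr1n.
    by rewrite (eq_bigr (fun _ => 1)) => [|*]; rewrite ?expr1n // sumr_const ler_nat.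
have : norm1 h <= 2 * ((2 * eta) * sqrtC k%:R).
  rewrite /norm1 (bigID (fun i => i \in S) predT) /=.
  apply: le_trans (lerD (lexx _) hS) _.
  rewrite -mulr2n -[leLHS]mulr_natl ler_wpM2l // (le_trans hS2) // ler_wpM2r ?sqrtC_ge0 ?ler0n //.
move/le_trans; apply; rewrite le_eqVlt; apply/orP; left; apply/eqP; ring.
Qed.
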